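(* Let $A\subseteq\Delta^{m-1}\times\Delta^{n-1}$, let $\mathscr T$ be a triangulation of $A$, and let $\sigma\in\mathscr T$. Then there exists $\tau\in\mathscr T$ with $\sigma\subseteq\tau$ such that every $f\in\Delta^{n-1}$ which is adjacent in $G(A)$ to some vertex of $G(\sigma)$ is also adjacent in $G(\tau)$ to some vertex of $G(\sigma)$. The same holds with the roles of $\Delta^{m-1}$ and $\Delta^{n-1}$ exchanged (i.e. for $e\in\Delta^{m-1}$ in place of $f$).
   Context: For a finite point set $A\subset\mathbb R^d$: a cell is a subset of $A$; a simplex is an affinely independent cell; a face of a cell $C$ is a subset $F\subseteq C$ which is the set of minimizers on $C$ of some linear functional. A triangulation of $A$ is a collection $\mathscr T$ of simplices of $A$, closed under taking faces, such that for all $\sigma,\sigma'\in\mathscr T$, $\mathrm{conv}(\sigma)\cap\mathrm{conv}(\sigma')=\mathrm{conv}(F)$ for a common face $F$ of $\sigma$ and $\sigma'$, and such that $\bigcup_{\sigma\in\mathscr T}\mathrm{conv}(\sigma)=\mathrm{conv}(A)$. $\Delta^{m-1}=\{e_1,\dots,e_m\}$ and $\Delta^{n-1}=\{f_1,\dots,f_n\}$ are the standard bases of $\mathbb R^m$ and $\mathbb R^n$, and $\Delta^{m-1}\times\Delta^{n-1}:=\{(e_i,f_j)\}\subset\mathbb R^m\times\mathbb R^n$. Let $K$ be the complete bipartite graph on $\Delta^{m-1}\cup\Delta^{n-1}$ with edges $e_if_j$. For $C\subseteq\Delta^{m-1}\times\Delta^{n-1}$, $G(C)$ is the minimal subgraph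 of $K$ with edge set $\{e_if_j:(e_i,f_j)\in C\}$. *)

(* Defs.v *)
(* Points of Delta^{m-1} x Delta^{n-1} live in R^m x R^n = R^(m+n),
   encoded as row vectors 'rV[R]_(m+n); R is an arbitrary ordered (real) field. *)
From HB Require Import structures.
From mathcomp Require Import all_boot all_order all_algebra.
Set Implicit Arguments. Unset Strict Implicit. Unset Printing Implicit Defensive.
Import Order.TTheory GRing.Theory Num.Theory.
Local Open Scope ring_scope.

Section Defs.
Variables (R : realFieldType) (m n : nat).

(* index (i,j) stands for the point (e_i, f_j) *)
Definition idx := ('I_m * 'I_n)%type.

Definition pt (p : idx) : 'rV[R]_(m + n) :=
  \row_k (match split k with
          | inl i => (i == p.1)%:R
          | inr j => (j == p.2)%:R
          end).

Definition lfun (w x : 'rV[R]_(m + n)) : R := \sum_k w 0 k * x 0 k.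

Definition in_conv (S : {set idx}) (x : 'rV[R]_(m + n)) : Prop :=
  exists lam : idx -> R,
    (forall p, 0 <= lam p) /\ \sum_(p in S) lam p = 1 /\
    x = \sum_(p in S) lam p *: pt p.

Definition simplex (S : {set idx}) : Prop :=
  forall lam : idx -> R,
    \sum_(p in S) lam p *: pt p = 0 -> \sum_(p in S) lam p = 0 ->
    forall p, p \in S -> lam p = 0.

(* F is a face of C: the set of minimizers on C of some linear functional
   (the empty set is also counted as a face) *)
Definition face (F C : {set idx}) : Prop :=
  F = set0 \/
  exists w : 'rV[R]_(m + n),
    F = [set p in C | [forall q in C, lfun w (pt p) <= lfun w (pt q)]].

Definition triangulation (A : {set idx}) (T : {set {set idx}}) : Prop :=
  [/\ (forall s, s \in T -> s \subset A /\ simplex s),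
      (forall s F, s \in T -> face F s -> F \in T),
      (forall s s', s \in T -> s' \in T ->
         exists F, [/\ face F s, face F s' &
           forall x, (in_conv s x /\ in_conv s' x) <-> in_conv F x])
    & (forall x, (exists2 s, s \in T & in_conv s x) <-> in_conv A x)].

End Defs.

(* The graph G(C): vertices e_i = inl i, f_j = inr j; edge e_i f_j iff (i,j) \in C. *)
Section Graph.
Variables (m n : nat).
Definition gvertex := ('I_m + 'I_n)%type.

Definition Gadj (C : {set ('I_m * 'I_n)}) (u v : gvertex) : bool :=
  match u, v with
  | inl i, inr j => (i, j) \in C
  | inr j, inl i => (i, j) \in C
  | _, _ => false
  end.

(* v is a vertex of the minimal subgraph G(C), i.e. incident to an edge of C *)
Definition Gvert (C : {set ('I_m * 'I_n)}) (v : gvertex) : bool :=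
  [exists u : gvertex, Gadj C v u].
End Graph.

(* Main.v *)
Require Import Defs.
From HB Require Import structures.
From mathcomp Require Import all_boot all_order all_algebra.
From mathcomp Require Import ring lra.
From Stdlib Require Import Classical.
Import Order.TTheory GRing.Theory Num.Theory.
Local Open Scope ring_scope.

Section Proof.
Variables (R : realFieldType) (m n : nat).
Local Notation idx := (idx m n).
Local Notation pt := (@pt R m n).
Local Notation vec := 'rV[R]_(m+n).
Local Notation in_conv := (@in_conv R m n).
Implicit Types (S A : {set idx}).
Set Implicit Arguments. Unset Strict Implicit.

Lemma sum_sub (V : zmodType) S A (F : idx -> V) : S \subset A ->
  \sum_(p in A) (if p \in S then F p else 0) = \sum_(p in S) F p.
Proof.
move=> sub; rewrite big_mkcond [RHS]big_mkcond; apply: eq_bigr => p _.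
case: (boolP (p \in S)) => hS; first by rewrite (subsetP sub _ hS).
by case: (p \in A).
Qed.

Lemma sumcomb S (al be : R) (a c : idx -> R) :
  \sum_(p in S) (al * a p + be * c p) *: pt p =
  al *: (\sum_(p in S) a p *: pt p) + be *: (\sum_(p in S) c p *: pt p).
Proof.
rewrite !scaler_sumr -big_split; apply: eq_bigr => p _.
by rewrite scalerDl !scalerA.
Qed.

Lemma sumcomb1 S (al be : R) (a c : idx -> R) :
  \sum_(p in S) (al * a p + be * c p) =
  al * (\sum_(p in S) a p) + be * (\sum_(p in S) c p).
Proof. by rewrite big_split -!mulr_sumr. Qed.

Lemma in_conv_sub S A x : S \subset A -> in_conv S x -> in_conv A x.
Proof.
move=> sub [lam [l0 [l1 ->]]].
exists (fun p => if p \in S then lam p else 0); split.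
  by move=> p; case: ifP => _ //; exact: l0.
split; first by rewrite (sum_sub _ sub).
rewrite [RHS](eq_bigr (fun p => if p \in S then lam p *: pt p else 0)).
  by rewrite (sum_sub _ sub).
by move=> p _; case: ifP => _ //; rewrite scale0r.
Qed.

Lemma in_conv_comb S u v t : in_conv S u -> in_conv S v -> 0 <= t <= 1 ->
  in_conv S ((1 - t) *: u + t *: v).
Proof.
move=> [a [a0 [a1 ->]]] [c [c0 [c1 ->]]] /andP[t0 t1].
exists (fun p => (1 - t) * a p + t * c p); split.
  by move=> p; rewrite addr_ge0 // mulr_ge0 // subr_ge0.
split; first by rewrite sumcomb1 a1 c1 !mulr1 subrK.
by rewrite sumcomb.
Qed.

Definition avg S : vec := \sum_(p in S) (#|S|%:R^-1 : R) *: pt p.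

Lemma card_neq0 S : S != set0 -> (#|S|%:R : R) != 0.
Proof. by move=> h; rewrite pnatr_eq0 -lt0n card_gt0. Qed.

Lemma in_conv_avg S : S != set0 -> in_conv S (avg S).
Proof.
move=> h; exists (fun _ => #|S|%:R^-1); split.
  by move=> _; rewrite invr_ge0 ler0n.
split=> //; rewrite sumr_const -(mulr_natr (#|S|%:R^-1)) mulVf //.
exact: card_neq0.
Qed.

Lemma coord_sum S (c : idx -> R) k :
  (\sum_(p in S) c p *: pt p) 0 k = \sum_(p in S) c p * pt p 0 k.
Proof. by rewrite summxE; apply: eq_bigr => p _; rewrite mxE. Qed.

Lemma pt_l p (i : 'I_m) : pt p 0 (lshift n i) = (i == p.1)%:R.
Proof.
have E : split (lshift n i) = inl i := unsplitK (inl i).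
by rewrite mxE E.
Qed.

Lemma pt_r p (j : 'I_n) : pt p 0 (rshift m j) = (j == p.2)%:R.
Proof.
have E : split (rshift m j) = inr j := unsplitK (inr j).
by rewrite mxE E.
Qed.

Lemma pt_ge0 p k : 0 <= pt p 0 k.
Proof. by rewrite mxE; case: split => ?; exact: ler0n. Qed.

Lemma simplex_uniq S (a c : idx -> R) : simplex R S ->
  \sum_(p in S) a p *: pt p = \sum_(p in S) c p *: pt p ->
  \sum_(p in S) a p = \sum_(p in S) c p ->
  forall p, p \in S -> a p = c p.
Proof.
move=> hS e1 e2 p pS; apply/eqP; rewrite -subr_eq0; apply/eqP.
apply: (hS (fun p => a p - c p)) => //.
  rewrite (eq_bigr (fun p => a p *: pt p - c p *: pt p)).
    by rewrite sumrB e1 subrr.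
  by move=> q _; rewrite scalerBl.
by rewrite sumrB e2 subrr.
Qed.


Lemma lim_conv S (b d : vec) : simplex R S ->
  (forall e, 0 < e -> exists t, [/\ 0 < t, t < e & in_conv S (b + t *: d)]) ->
  in_conv S b.
Proof.
move=> hS H.
have [t1 [t1p _ [l1 [l10 [l11 e1]]]]] := H 1 ltr01.
have [t2 [t2p t21 [l2 [l20 [l21 e2]]]]] := H t1 t1p.
have t12 : t1 - t2 != 0 by rewrite subr_eq0 gt_eqF.
pose al := t1 / (t1 - t2); pose be := - t2 / (t1 - t2).
pose mu p := al * l2 p + be * l1 p.
have hab : al + be = 1 by rewrite /al /be; field.
have hab2 : al * t2 + be * t1 = 0 by rewrite /al /be; field.
have emu : \sum_(p in S) mu p *: pt p = b.
  rewrite sumcomb -e1 -e2 !scalerDr !scalerA addrACA -!scalerDl hab hab2.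
  by rewrite scale1r scale0r addr0.
have smu : \sum_(p in S) mu p = 1 by rewrite sumcomb1 l11 l21 !mulr1.
case: (boolP [forall p in S, 0 <= mu p]) => [/forall_inP allp | /forall_inPn [p pS]].
  exists (fun p => if p \in S then mu p else 0); split.
    by move=> p; case: ifP => // /allp.
  split; first by rewrite -smu; apply: eq_bigr => p ->.
  by rewrite -[LHS]emu; apply: eq_bigr => p ->.
rewrite -ltNge => mup.
have c0 := l20 p.
have ca : 0 < l2 p - mu p by rewrite subr_gt0 (lt_le_trans mup c0).
have sp : 0 < t2 * (- mu p) / (l2 p - mu p).
  by rewrite divr_gt0 // mulr_gt0 // oppr_gt0.
have [t3 [t3p t3s [l3 [l30 [l31 e3]]]]] := H _ sp.
have t2n : t2 != 0 by rewrite gt_eqF.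
pose nu q := (1 - t3/t2) * mu q + (t3/t2) * l2 q.
have := @simplex_uniq S l3 nu hS _ _ p pS.
have -> : \sum_(p in S) l3 p *: pt p = \sum_(p in S) nu p *: pt p.
  rewrite sumcomb emu -e2 -e3 scalerDr scalerA divfK // addrA -scalerDl.
  by rewrite subrK scale1r.
have -> : \sum_(p in S) l3 p = \sum_(p in S) nu p.
  by rewrite sumcomb1 smu l21 l31 !mulr1 subrK.
move=> /(_ erefl erefl) e.
have h1 : t3 * (l2 p - mu p) < t2 * (- mu p) by rewrite -ltr_pdivlMr.
have E : nu p * t2 = t2 * mu p + t3 * (l2 p - mu p) by rewrite /nu; field.
have : nu p * t2 < 0 by rewrite E; rewrite mulrN in h1; lra.
by rewrite pmulr_llt0 // -e ltNge l30.
Qed.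

Lemma face_sub (F C : {set idx}) : face R F C -> F = set0 \/ F \subset C.
Proof.
case=> [->|[w ->]]; [by left|right].
by apply/subsetP => p; rewrite inE => /andP[].
Qed.

Lemma in_conv0 x : ~ in_conv set0 x.
Proof.
move=> [l [_ [h _]]]; move: h; rewrite big_set0 => /eqP.
by rewrite eq_sym oner_eq0.
Qed.

Lemma sub_of_avg A T s tau : triangulation R A T -> s \in T -> s != set0 ->
  tau \in T -> in_conv tau (avg s) -> s \subset tau.
Proof.
case=> hT1 _ hT3 _ sT s0 tT htau.
have [F [fs ft hx]] := hT3 _ _ sT tT.
have [_ simp] := hT1 _ sT.
have hF := (proj1 (hx (avg s))) (conj (in_conv_avg s0) htau).
have [F0|Fs] := face_sub fs; first by move: hF; rewrite F0 => /in_conv0.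
have [F0|Ft] := face_sub ft; first by move: hF; rewrite F0 => /in_conv0.
case: hF => [mu [mu0 [mu1 emu]]].
apply/subsetP => p ps; apply: (subsetP Ft).
pose lam q := #|s|%:R^-1 - (if q \in F then mu q else 0).
have hv : \sum_(q in s) lam q *: pt q = 0.
  rewrite (eq_bigr (fun q => #|s|%:R^-1 *: pt q - (if q \in F then mu q *: pt q else 0))).
    by rewrite sumrB (sum_sub _ Fs) -emu /avg subrr.
  by move=> q _; rewrite scalerBl; case: ifP => _ //; rewrite scale0r.
have hs : \sum_(q in s) lam q = 0.
  rewrite sumrB (sum_sub _ Fs) mu1 sumr_const -(mulr_natr (#|s|%:R^-1)) mulVf ?subrr //.
  exact: card_neq0.
have := simp lam hv hs p ps; rewrite /lam.
case: (boolP (p \in F)) => // pF.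
by rewrite subr0 => /eqP; rewrite invr_eq0 (negbTE (card_neq0 s0)).
Qed.

Lemma findelta (L : seq {set idx}) (P : {set idx} -> R -> Prop) :
 (forall tau, tau \in L -> exists2 e, 0 < e & forall t, 0 < t -> t < e -> ~ P tau t) ->
 exists2 e, 0 < e /\ e <= 1 & forall tau, tau \in L -> forall t, 0 < t -> t < e -> ~ P tau t.
Proof.
elim: L => [|x L IH] H.
  exists 1 => //; split => //; exact: ltr01.
have [e1 e1p h1] := H x (mem_head _ _).
have [e2 [e2p e21] h2] : exists2 e, 0 < e /\ e <= 1 &
    forall tau, tau \in L -> forall t, 0 < t -> t < e -> ~ P tau t.
  by apply: IH => tau tL; apply: H; rewrite inE tL orbT.
exists (Order.min e1 e2).
  by split; [rewrite lt_min e1p e2p | rewrite ge_min e21 orbT].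
move=> tau; rewrite inE => /orP[/eqP->|tL] t t0; rewrite lt_min => /andP[a b].
  exact: h1.
exact: h2.
Qed.

Lemma key A T s y : triangulation R A T -> s \in T -> s != set0 -> in_conv A y ->
 exists2 tau, tau \in T & s \subset tau /\
   exists t, [/\ 0 < t, t <= 1 & in_conv tau (avg s + t *: (y - avg s))].
Proof.
move=> hT sT s0 yA; have hT' := hT; case: hT' => hT1 _ _ hT4.
apply: NNPP => Hn.
set b := avg s.
have hxA : forall t, 0 <= t <= 1 -> in_conv A (b + t *: (y - b)).
  move=> t ht.
  have -> : b + t *: (y - b) = (1 - t) *: b + t *: y.
    by rewrite scalerBr scalerBl scale1r addrA addrAC.
  apply: in_conv_comb => //.
  exact: in_conv_sub (hT1 s sT).1 (in_conv_avg s0).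
have Hd : forall tau, tau \in enum T -> exists2 e, 0 < e &
    forall t, 0 < t -> t < e -> ~ in_conv tau (b + t *: (y - b)).
  move=> tau; rewrite mem_enum => tT.
  case: (classic (in_conv tau b)) => hb.
    exists 1 => [|t t0 t1 hc]; first exact: ltr01.
    apply: Hn; exists tau => //; split; first exact: sub_of_avg hT sT s0 tT hb.
    by exists t; split => //; apply: ltW.
  apply: NNPP => He; apply: hb; apply: (@lim_conv tau b (y - b)).
    exact: (hT1 _ tT).2.
  move=> e ep; apply: NNPP => Hne; apply: He; exists e => // t t0 te hc.
  by apply: Hne; exists t.
have [e [ep e1] he] := findelta Hd.
have h2 : 0 < e / 2 by rewrite divr_gt0.
have hx2 : in_conv A (b + (e/2) *: (y - b)).
  by apply: hxA; apply/andP; split; [exact: ltW | lra].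
have [tau tT htau] := (hT4 _).2 hx2.
apply: (he tau _ (e/2)) htau => //; first by rewrite mem_enum.
lra.
Qed.

Lemma cover S (x : vec) (lam : idx -> R) k : (forall p, 0 <= lam p) ->
  x = \sum_(p in S) lam p *: pt p -> 0 < x 0 k ->
  exists2 p, p \in S & 0 < lam p /\ 0 < pt p 0 k.
Proof.
move=> l0 -> ; rewrite coord_sum => hpos.
apply: NNPP => H; move: hpos; rewrite big1 ?ltxx // => p pS.
have := l0 p; have := pt_ge0 p k.
rewrite le_eqVlt => /orP[/eqP<-|pp]; first by rewrite mulr0.
rewrite le_eqVlt => /orP[/eqP<-|lp]; first by rewrite mul0r.
by exfalso; apply: H; exists p.
Qed.

Lemma lower S (x : vec) (lam : idx -> R) p k : (forall p, 0 <= lam p) ->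
  x = \sum_(p in S) lam p *: pt p -> p \in S -> lam p * pt p 0 k <= x 0 k.
Proof.
move=> l0 -> pS; rewrite coord_sum (bigD1 p) //= lerDl sumr_ge0 // => q _.
by rewrite mulr_ge0 // pt_ge0.
Qed.

Lemma avg_ge0 S k : 0 <= avg S 0 k.
Proof.
rewrite /avg coord_sum sumr_ge0 // => p _.
by rewrite mulr_ge0 ?pt_ge0 // invr_ge0 ler0n.
Qed.

Lemma side A T s (a c : nat) (K : idx -> 'I_a) (O : idx -> 'I_c)
  (ck : 'I_a -> 'I_(m+n)) (co : 'I_c -> 'I_(m+n)) :
  (forall p j, pt p 0 (ck j) = (j == K p)%:R) ->
  (forall p i, pt p 0 (co i) = (i == O p)%:R) ->
  triangulation R A T -> s \in T ->
  exists2 tau, tau \in T & s \subset tau /\ forall j,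
    (exists2 q, q \in A & K q = j /\ exists2 q', q' \in s & O q' = O q) ->
    exists2 p, p \in tau & K p = j /\ exists2 q', q' \in s & O q' = O p.
Proof.
move=> hk ho hT sT.
pose P := [set q in A | [exists q' in s, O q' == O q]].
case: (eqVneq P set0) => P0.
  exists s => //; split => // j [q qA [_ [q' q's e]]]; exfalso.
  have : q \in P by rewrite inE qA; apply/exists_inP; exists q' => //; rewrite e.
  by rewrite P0 inE.
have s0 : s != set0.
  have [q] := set0Pn _ P0; rewrite inE => /andP[_ /exists_inP [q' q's _]].
  by apply/set0Pn; exists q'.
have PA : P \subset A by apply/subsetP => q; rewrite inE => /andP[].
have yA := in_conv_sub PA (in_conv_avg P0).
have [tau tT [stau [t [t0 t1 [lam [l0 [l1 ex]]]]]]] := key hT sT s0 yA.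
exists tau => //; split => // j [q qA [Kq [q' q's Oq]]].
set x := avg s + t *: (avg P - avg s) in ex.
have xE : forall k, x 0 k = (1 - t) * avg s 0 k + t * avg P 0 k.
  by move=> k; rewrite /x !mxE; ring.
have qP : q \in P by rewrite inE qA; apply/exists_inP; exists q' => //; rewrite Oq.
have pos : 0 < x 0 (ck j).
  rewrite xE.
  have yk : 0 < avg P 0 (ck j).
    rewrite /avg coord_sum (bigD1 q) //= hk Kq eqxx mulr1.
    have h1 : 0 < (#|P|%:R : R)^-1 by rewrite invr_gt0 ltr0n card_gt0.
    have h2 : 0 <= \sum_(i in P | i != q) #|P|%:R^-1 * pt i 0 (ck j).
      by apply: sumr_ge0 => i _; rewrite mulr_ge0 ?pt_ge0 // invr_ge0 ler0n.
    lra.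
  have h3 : 0 <= (1 - t) * avg s 0 (ck j) by rewrite mulr_ge0 ?avg_ge0 // subr_ge0.
  have h4 : 0 < t * avg P 0 (ck j) by rewrite mulr_gt0.
  lra.
have [p ptau [lp ppos]] := cover l0 ex pos.
rewrite hk in ppos.
have Kp : K p = j.
  by apply/eqP; rewrite eq_sym; apply: contraTT ppos => /negbTE ->; rewrite ltxx.
exists p => //; split => //.
case: (boolP [exists q'' in s, O q'' == O p]) => [/exists_inP [q'' h1 /eqP h2]|nq].
  by exists q''.
exfalso.
have low := lower (co (O p)) l0 ex ptau.
rewrite ho eqxx mulr1 in low.
have zs : avg s 0 (co (O p)) = 0.
  rewrite /avg coord_sum big1 // => r rs; rewrite ho.
  case: eqP => [e|_]; last by rewrite mulr0.
  by move/exists_inP: nq; case; exists r => //; rewrite e.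
have zP : avg P 0 (co (O p)) = 0.
  rewrite /avg coord_sum big1 // => r; rewrite inE => /andP[_ /exists_inP [r' r's /eqP e]].
  rewrite ho; case: eqP => [e'|_]; last by rewrite mulr0.
  by move/exists_inP: nq; case; exists r' => //; rewrite e e'.
move: low; rewrite xE zs zP !mulr0 addr0 => low.
lra.
Qed.

End Proof.

Theorem proposition6p2 (R : realFieldType) (m n : nat)
  (A : {set ('I_m * 'I_n)}) (T : {set {set ('I_m * 'I_n)}})
  (s : {set ('I_m * 'I_n)}) :
  triangulation R A T -> s \in T ->
  (exists2 t, t \in T &
     s \subset t /\
     forall j : 'I_n,
       (exists u, Gvert s u /\ Gadj A (inr j) u) ->
       (exists u, Gvert s u /\ Gadj t (inr j) u)) /\
  (exists2 t, t \in T &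
     s \subset t /\
     forall i : 'I_m,
       (exists u, Gvert s u /\ Gadj A (inl i) u) ->
       (exists u, Gvert s u /\ Gadj t (inl i) u)).
Proof.
move=> hT sT; split.
  have [tau tT [stau H]] := @side R m n A T s _ _ snd fst (@rshift m n) (@lshift m n)
    (fun p j => @pt_r R m n p j) (fun p i => @pt_l R m n p i) hT sT.
  exists tau => //; split => // j [u [gv ga]].
  case: u gv ga => [i|j'] gv ga; last by [].
  move/existsP: gv => [[i'|j'] //= hs].
  have [p ptau [Kp [q' q's Oq]]] :=
    H j (ex_intro2 _ _ (i, j) ga (conj erefl (ex_intro2 _ _ (i, j') hs erefl))).
  exists (inl p.1); split.
    by apply/existsP; exists (inr q'.2); rewrite /= -Oq -surjective_pairing.
  by rewrite /= -Kp -surjective_pairing.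
have [tau tT [stau H]] := @side R m n A T s _ _ fst snd (@lshift m n) (@rshift m n)
  (fun p i => @pt_l R m n p i) (fun p j => @pt_r R m n p j) hT sT.
exists tau => //; split => // i [u [gv ga]].
case: u gv ga => [i'|j] gv ga; first by [].
move/existsP: gv => [[i'|j'] //= hs].
have [p ptau [Kp [q' q's Oq]]] :=
  H i (ex_intro2 _ _ (i, j) ga (conj erefl (ex_intro2 _ _ (i', j) hs erefl))).
exists (inr p.2); split.
  by apply/existsP; exists (inl q'.1); rewrite /= -Oq -surjective_pairing.
by rewrite /= -Kp -surjective_pairing.
Qed.
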